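(* Let $\mathcal{Q}$ be a quadrangle with vertices $A,C,B,D$ in cyclic order, and let $a,b$ be the tangent lines to $\mathcal{C}_{\mathcal{Q}}$ at $A$ and $B$. For $X\in (A\vee B)\setminus\{A,B\}$ let $x=(X\cdot\rho_{A,B})\vee(a\wedge b)$; then $X\notin x$ and $$\mathcal{C}_{\mathcal{Q}}=\{\,C\cdot\rho_{X,x}\;:\;X\in (A\vee B)\setminus\{A,B\}\,\}\cup\{A,B\}.$$
   Context: $\mathbb{P}^2$ denotes the projective plane over a field $F$ with $\operatorname{char}F\neq 2$. For distinct points $X,Y$, $X\vee Y$ is the line through them; for distinct lines $\ell,m$, $\ell\wedge m$ is their common point. Maps act on the right: $X\cdot\rho$. Four distinct collinear points $A,C,B,D$ form a harmonic set with conjugate pairs $\{A,B\}$ and $\{C,D\}$ if the cross-ratio $(A,B;C,D)=-1$; $D$ is then the harmonic conjugate of $C$ with respect to $A,B$. Four distinct concurrent lines form a harmonic pencil with given conjugate pairs if some (equivalently every) line not through their common point meets them in a harmonic set with the corresponding conjugate pairs. For distinct points $A,B$ on a line $\ell$, $\rho_{A,B}:\ell\to\ell$ fixes $A,B$ and sends every other point of $\ell$ to its harmonic conjugate with respect to $A,B$. For a point $P$ and a line $m$ with $P\notin m$, the harmonic reflection $\rho_{P,m}$ of $\mathbb{P}^2$ fixes $P$ and every point of $m$ and sends every other point $X$ to the harmonic conjugate of $X$ with respect to $P$ and $(X\vee P)\wedge m$. A quadrangle $\mathcal{Q}$ with vertices $A,C,B,D$ (in cyclic order) consists of four points in general position (no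 three collinear) together with this cyclic order up to reversal; its sides are $A\vee C, C\vee B, B\vee D, D\vee A$, and its diagonal lines are $A\vee B$ and $C\vee D$. The harmonic curve $\mathcal{C}_{\mathcal{Q}}$ is the set consisting of $A,C,B,D$ together with all points $Z\notin\{A,B,C,D\}$ such that $Z\vee A, Z\vee C, Z\vee B, Z\vee D$ are four distinct lines forming a harmonic pencil with conjugate pairs $\{Z\vee A,Z\vee B\}$ and $\{Z\vee C,Z\vee D\}$. The tangent line at a vertex $V$ of $\mathcal{Q}$ is the harmonic conjugate, within the pencil of lines through $V$, of the diagonal line through $V$ with respect to the two sides through $V$. *)

(* Defs.v *)
(* Projective plane P^2(F) in homogeneous coordinates:
   points and lines are nonzero row vectors of F^3, taken up to a nonzero
   scalar (relation [peq]); a point p is on a line l iff p . l = 0. *)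
From HB Require Import structures.
From mathcomp Require Import all_boot all_order all_algebra.
Set Implicit Arguments. Unset Strict Implicit. Unset Printing Implicit Defensive.
Import Order.TTheory GRing.Theory Num.Theory.
Local Open Scope ring_scope.

Section Proj.
Variable F : fieldType.
Notation vec := 'rV[F]_3.

Definition peq (u v : vec) : Prop := u != 0 /\ exists k : F, k != 0 /\ v = k *: u.

Definition dot (u v : vec) : F := \sum_(i < 3) u 0 i * v 0 i.

Definition incident (p l : vec) : Prop := dot p l = 0.

Definition cross (u v : vec) : vec :=
  \row_(k < 3) (u 0 (inord ((k + 1) %% 3)) * v 0 (inord ((k + 2) %% 3))
               - u 0 (inord ((k + 2) %% 3)) * v 0 (inord ((k + 1) %% 3))).
Definition join (X Y : vec) : vec := cross X Y.
Definition meet (l m : vec) : vec := cross l m.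

(* r is the cross-ratio (A,B;C,D) of four collinear points, A <> B:
   writing C = c1 A + c2 B, D = d1 A + d2 B, (A,B;C,D) = (c2 d1)/(c1 d2)
   (= [A,C][B,D]/([A,D][B,C]) in terms of 2x2 brackets). *)
Definition is_cross_ratio (A B C D : vec) (r : F) : Prop :=
  exists c1 c2 d1 d2 : F,
    C = c1 *: A + c2 *: B /\ D = d1 *: A + d2 *: B /\
    c1 * d2 != 0 /\ r = (c2 * d1) / (c1 * d2).

Definition distinct4 (P Q R S : vec) : Prop :=
  [/\ P != 0, Q != 0, R != 0 & S != 0] /\
  [/\ ~ peq P Q, ~ peq P R & ~ peq P S] /\
  [/\ ~ peq Q R, ~ peq Q S & ~ peq R S].

(* A,C,B,D form a harmonic set with conjugate pairs {A,B}, {C,D} *)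
Definition harmonic (A B C D : vec) : Prop :=
  distinct4 A B C D /\ incident C (join A B) /\ incident D (join A B) /\
  is_cross_ratio A B C D (-1).

Definition harmonic_pencil (l1 l2 l3 l4 : vec) : Prop :=
  distinct4 l1 l2 l3 l4 /\
  exists O : vec, O != 0 /\ incident O l1 /\ incident O l2 /\
    incident O l3 /\ incident O l4 /\
    exists m : vec, m != 0 /\ ~ incident O m /\
      harmonic (meet m l1) (meet m l2) (meet m l3) (meet m l4).

Definition quadrangle (A C B D : vec) : Prop :=
  distinct4 A C B D /\
  ~ incident B (join A C) /\ ~ incident D (join A C) /\
  ~ incident D (join A B) /\ ~ incident D (join C B).

Definition on_harmonic_curve (A C B D Z : vec) : Prop :=
  Z != 0 /\
  (peq Z A \/ peq Z C \/ peq Z B \/ peq Z D \/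
   ((~ peq Z A /\ ~ peq Z C /\ ~ peq Z B /\ ~ peq Z D) /\
    harmonic_pencil (join Z A) (join Z B) (join Z C) (join Z D))).

(* t is the tangent line at the vertex V of the quadrangle, where s1, s2 are
   the sides through V and d the diagonal line through V: t is the harmonic
   conjugate of d w.r.t. s1, s2 in the pencil through V *)
Definition tangent_line (s1 s2 d t : vec) : Prop := harmonic_pencil s1 s2 d t.

(* Y = X . rho_{P,m}, the harmonic reflection with centre P and axis m
   (P not on m) *)
Definition harm_refl (P m X Y : vec) : Prop :=
  P != 0 /\ m != 0 /\ ~ incident P m /\ X != 0 /\
  (peq X P -> peq Y P) /\
  (incident X m -> peq X Y) /\
  (~ peq X P -> ~ incident X m -> harmonic P (meet (join X P) m) X Y).

End Proj.

(* Main.v *)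
Require Import Defs.
From HB Require Import structures.
From mathcomp Require Import all_boot all_order all_algebra.
From mathcomp Require Import ring.
Set Implicit Arguments. Unset Strict Implicit. Unset Printing Implicit Defensive.
Import Order.TTheory GRing.Theory Num.Theory.
Local Open Scope ring_scope.

Section V3.
Variable F : fieldType.
Notation vec := 'rV[F]_3.

Definition i0 : 'I_3 := @Ordinal 3 0 isT.
Definition i1 : 'I_3 := @Ordinal 3 1 isT.
Definition i2 : 'I_3 := @Ordinal 3 2 isT.

Definition mk3 (x y z : F) : vec := \row_(i < 3) nth 0 [:: x; y; z] i.

Lemma mk3_0 x y z : mk3 x y z 0 i0 = x. Proof. by rewrite mxE. Qed.
Lemma mk3_1 x y z : mk3 x y z 0 i1 = y. Proof. by rewrite mxE. Qed.
Lemma mk3_2 x y z : mk3 x y z 0 i2 = z. Proof. by rewrite mxE. Qed.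

Lemma ord3P (P : 'I_3 -> Prop) : P i0 -> P i1 -> P i2 -> forall i, P i.
Proof.
move=> h0 h1 h2 [[|[|[|k]]] hk] //.
- by have -> : Ordinal hk = i0 by apply: val_inj.
- by have -> : Ordinal hk = i1 by apply: val_inj.
- by have -> : Ordinal hk = i2 by apply: val_inj.
Qed.

Lemma vec3E (u : vec) : u = mk3 (u 0 i0) (u 0 i1) (u 0 i2).
Proof.
apply/rowP; apply: ord3P; by rewrite mxE.
Qed.

Lemma vec3_ex (u : vec) : exists x y z, u = mk3 x y z.
Proof. by exists (u 0 i0), (u 0 i1), (u 0 i2); apply: vec3E. Qed.

Lemma eq3 x y z x' y' z' : (mk3 x y z = mk3 x' y' z') <-> [/\ x = x', y = y' & z = z'].
Proof.
split.
- by move=> h; split; [move: (congr1 (fun v : vec => v 0 i0) h)|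
     move: (congr1 (fun v : vec => v 0 i1) h)|move: (congr1 (fun v : vec => v 0 i2) h)];
     rewrite !mxE.
- by case=> -> -> ->.
Qed.

Lemma zero3 : (0 : vec) = mk3 0 0 0.
Proof. by apply/rowP; apply: ord3P; rewrite !mxE. Qed.

Lemma add3 x y z x' y' z' : mk3 x y z + mk3 x' y' z' = mk3 (x + x') (y + y') (z + z').
Proof. by apply/rowP; apply: ord3P; rewrite !mxE. Qed.

Lemma scale3 k x y z : k *: mk3 x y z = mk3 (k * x) (k * y) (k * z).
Proof. by apply/rowP; apply: ord3P; rewrite !mxE. Qed.

Lemma opp3 x y z : - mk3 x y z = mk3 (- x) (- y) (- z).
Proof. by apply/rowP; apply: ord3P; rewrite !mxE. Qed.

Lemma dot3 x y z x' y' z' : dot (mk3 x y z) (mk3 x' y' z') = x * x' + y * y' + z * z'.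
Proof.
rewrite /dot !big_ord_recr big_ord0 /= add0r.
have -> : (ord_max : 'I_3) = i2 by apply: val_inj.
have -> : (widen_ord (leqnSn 2) ord_max : 'I_3) = i1 by apply: val_inj.
have -> : (widen_ord (leqnSn 2) (widen_ord (leqnSn 1) ord_max) : 'I_3) = i0 by apply: val_inj.
by rewrite !mxE.
Qed.

Lemma inord0 : (inord 0 : 'I_3) = i0. Proof. by apply: val_inj; rewrite /= inordK. Qed.
Lemma inord1 : (inord 1 : 'I_3) = i1. Proof. by apply: val_inj; rewrite /= inordK. Qed.
Lemma inord2 : (inord 2 : 'I_3) = i2. Proof. by apply: val_inj; rewrite /= inordK. Qed.

Lemma cross3 x y z x' y' z' : cross (mk3 x y z) (mk3 x' y' z') =
  mk3 (y * z' - z * y') (z * x' - x * z') (x * y' - y * x').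
Proof.
apply/rowP; apply: ord3P; rewrite mxE /=.
- by rewrite inord1 inord2 !mxE.
- by rewrite inord2 inord0 !mxE.
- by rewrite inord0 inord1 !mxE.
Qed.


Ltac cmp u := let a := fresh "a" in let b := fresh "b" in let c := fresh "c" in
  case: (vec3_ex u) => [a [b [c ->]]].

Ltac vsimp := repeat progress rewrite ?mk3_0 ?mk3_1 ?mk3_2 ?zero3 ?scale3 ?add3 ?opp3 ?cross3 ?dot3 /=.
Ltac vsimpn := repeat progress rewrite ?mk3_0 ?mk3_1 ?mk3_2 ?scale3 ?add3 ?opp3 ?cross3 ?dot3 /=.
Ltac veq := vsimp; apply/eq3; split; ring.
Lemma four_nz : (2%:R : F) != 0 -> (4%:R : F) != 0.
Proof. by move=> h; rewrite (_ : 4 = 2 * 2)%N // natrM mulf_neq0. Qed.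
Ltac nzs := repeat (apply/andP; split); try done;
  try (rewrite ?oppr_eq0 ?invr_eq0; repeat (apply: mulf_neq0); try done; apply: four_nz; done).
Ltac veq_f := vsimp; apply/eq3; split; field; nzs.

Lemma crossC u v : cross v u = - cross u v :> vec.
Proof. cmp u; cmp v; veq. Qed.
Lemma crossuu u : cross u u = 0 :> vec.
Proof. cmp u; veq. Qed.
Lemma crossDr u v w : cross u (v + w) = cross u v + cross u w :> vec.
Proof. cmp u; cmp v; cmp w; veq. Qed.
Lemma crossDl u v w : cross (v + w) u = cross v u + cross w u :> vec.
Proof. cmp u; cmp v; cmp w; veq. Qed.
Lemma crossZr u k v : cross u (k *: v) = k *: cross u v :> vec.
Proof. cmp u; cmp v; veq. Qed.
Lemma crossZl u k v : cross (k *: v) u = k *: cross v u :> vec.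
Proof. cmp u; cmp v; veq. Qed.
Lemma crossNr u v : cross u (- v) = - cross u v :> vec.
Proof. cmp u; cmp v; veq. Qed.
Lemma crossNl u v : cross (- v) u = - cross v u :> vec.
Proof. cmp u; cmp v; veq. Qed.
Lemma crossBr u v w : cross u (v - w) = cross u v - cross u w :> vec.
Proof. by rewrite crossDr crossNr. Qed.
Lemma crossBl u v w : cross (v - w) u = cross v u - cross w u :> vec.
Proof. by rewrite crossDl crossNl. Qed.
Lemma cross0r u : cross u 0 = 0 :> vec.
Proof. cmp u; veq. Qed.
Lemma cross0l u : cross 0 u = 0 :> vec.
Proof. cmp u; veq. Qed.

Lemma dotC u v : dot u v = dot v u :> F.
Proof. cmp u; cmp v; vsimp; ring. Qed.
Lemma dotDr u v w : dot u (v + w) = dot u v + dot u w :> F.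
Proof. cmp u; cmp v; cmp w; vsimp; ring. Qed.
Lemma dotDl u v w : dot (v + w) u = dot v u + dot w u :> F.
Proof. cmp u; cmp v; cmp w; vsimp; ring. Qed.
Lemma dotZr u k v : dot u (k *: v) = k * dot u v :> F.
Proof. cmp u; cmp v; vsimp; ring. Qed.
Lemma dotZl u k v : dot (k *: v) u = k * dot v u :> F.
Proof. cmp u; cmp v; vsimp; ring. Qed.
Lemma dotNr u v : dot u (- v) = - dot u v :> F.
Proof. cmp u; cmp v; vsimp; ring. Qed.
Lemma dotNl u v : dot (- v) u = - dot v u :> F.
Proof. cmp u; cmp v; vsimp; ring. Qed.
Lemma dotBr u v w : dot u (v - w) = dot u v - dot u w :> F.
Proof. by rewrite dotDr dotNr. Qed.
Lemma dotBl u v w : dot (v - w) u = dot v u - dot w u :> F.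
Proof. by rewrite dotDl dotNl. Qed.
Lemma dot0r u : dot u 0 = 0 :> F.
Proof. cmp u; vsimp; ring. Qed.
Lemma dot0l u : dot 0 u = 0 :> F.
Proof. cmp u; vsimp; ring. Qed.
Lemma dot_cross_l (u v : vec) : dot u (cross u v) = 0.
Proof. cmp u; cmp v; vsimp; ring. Qed.
Lemma dot_cross_r (u v : vec) : dot v (cross u v) = 0.
Proof. cmp u; cmp v; vsimp; ring. Qed.
Lemma dot_cross_cyc (u v w : vec) : dot u (cross v w) = dot v (cross w u).
Proof. cmp u; cmp v; cmp w; vsimp; ring. Qed.
Lemma cross_cross (u v w : vec) : cross (cross u v) w = dot u w *: v - dot v w *: u.
Proof. cmp u; cmp v; cmp w; veq. Qed.

Lemma subr0_eq (x y : F) : x - y = 0 -> x = y.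
Proof. by move/eqP; rewrite subr_eq0 => /eqP. Qed.

Lemma subr0_eq' (x y : F) : y - x = 0 -> x = y.
Proof. by move=> h; apply/esym/subr0_eq. Qed.

Lemma sub_of (l r : F) : l = r -> l - r = 0.
Proof. by move=> ->; rewrite subrr. Qed.

Ltac from e := match type of e with ?l = ?r =>
  first [ apply: subr0_eq; (transitivity (l - r); [ring | exact: sub_of e])
        | apply: subr0_eq'; (transitivity (l - r); [ring | exact: sub_of e]) ] end.

Lemma cross_par (u v : vec) : u != 0 -> cross u v = 0 -> exists t, v = t *: u.
Proof.
cmp u; cmp v; rewrite zero3 cross3 => nz /eq3 [e1 e2 e3].
have [h0|h0] := eqVneq a 0.
  have [h1|h1] := eqVneq b 0.
    have [h2|h2] := eqVneq c 0.
      by move: nz; rewrite h0 h1 h2 eqxx.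
    exists (c0 / c); rewrite scale3; apply/eq3; split.
    - have -> : a0 = (c * a0) / c by field.
      have -> : c * a0 = a * c0 by from e2.
      by rewrite h0; field.
    - have -> : b0 = (c * b0) / c by field.
      have -> : c * b0 = b * c0 by from e1.
      by rewrite h1; field.
    - by field.
  exists (b0 / b); rewrite scale3; apply/eq3; split.
  - have -> : a0 = (b * a0) / b by field.
    have -> : b * a0 = a * b0 by from e3.
    by rewrite h0; field.
  - by field.
  - have -> : c0 = (b * c0) / b by field.
    have -> : b * c0 = c * b0 by from e1.
    by field.
exists (a0 / a); rewrite scale3; apply/eq3; split.
- by field.
- have -> : b0 = (a * b0) / a by field.
  have -> : a * b0 = b * a0 by from e3.
  by field.
- have -> : c0 = (a * c0) / a by field.
  have -> : a * c0 = c * a0 by from e2.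
  by field.
Qed.

Lemma dot_nz (u : vec) : u != 0 -> exists m, m != 0 /\ dot u m != 0.
Proof.
cmp u => nz.
have [h0|h0] := eqVneq a 0.
  have [h1|h1] := eqVneq b 0.
    have [h2|h2] := eqVneq c 0.
      by move: nz; rewrite h0 h1 h2 zero3 eqxx.
    exists (mk3 0 0 1); rewrite dot3; split; last by rewrite !mulr0 !add0r mulr1.
    by apply/eqP; rewrite zero3 => /eq3 [_ _ /eqP]; rewrite oner_eq0.
  exists (mk3 0 1 0); rewrite dot3; split; last by rewrite !mulr0 mulr1 add0r addr0.
  by apply/eqP; rewrite zero3 => /eq3 [_ /eqP]; rewrite oner_eq0.
exists (mk3 1 0 0); rewrite dot3; split; last by rewrite !mulr0 mulr1 !addr0.
by apply/eqP; rewrite zero3 => /eq3 [/eqP]; rewrite oner_eq0.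
Qed.


Lemma cross_nz_l (u v : vec) : cross u v != 0 -> u != 0.
Proof. by apply: contraNneq => ->; rewrite cross0l. Qed.
Lemma cross_nz_r (u v : vec) : cross u v != 0 -> v != 0.
Proof. by apply: contraNneq => ->; rewrite cross0r. Qed.

Lemma peq_cross (u v : vec) : peq u v -> cross u v = 0.
Proof. by case=> _ [k [_ ->]]; rewrite crossZr crossuu scaler0. Qed.

Lemma peq_nz (u v : vec) : peq u v -> u != 0 /\ v != 0.
Proof. by case=> h [k [hk ->]]; rewrite scaler_eq0 negb_or hk h. Qed.

Lemma cross_peq (u v : vec) : u != 0 -> v != 0 -> cross u v = 0 -> peq u v.
Proof.
move=> hu hv /(cross_par hu) [t ht]; split=> //; exists t; split=> //.
by apply: contraNneq hv => t0; rewrite ht t0 scale0r.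
Qed.

Lemma npeq (u v : vec) : cross u v != 0 -> ~ peq u v.
Proof. by move=> h /peq_cross; apply/eqP. Qed.

Lemma peq_scale (u : vec) k : u != 0 -> k != 0 -> peq u (k *: u).
Proof. by move=> hu hk; split=> //; exists k. Qed.

Lemma peq_refl (u : vec) : u != 0 -> peq u u.
Proof. by move=> hu; split=> //; exists 1; rewrite scale1r oner_eq0. Qed.

Lemma peq_sym (u v : vec) : peq u v -> peq v u.
Proof.
case=> hu [k [hk ->]]; split; first by rewrite scaler_eq0 negb_or hk.
by exists k^-1; rewrite invr_eq0 hk scalerA mulVf // scale1r.
Qed.

Lemma peq_trans (u v w : vec) : peq u v -> peq v w -> peq u w.
Proof.
case=> hu [k [hk ->]] [_ [l [hl ->]]]; split=> //; exists (l * k).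
by rewrite mulf_neq0 // scalerA.
Qed.

Definition hform (P Q R S : vec) : Prop :=
  cross P Q != 0 /\ exists c1 c2 k : F,
    [/\ c1 != 0, c2 != 0, k != 0, R = c1 *: P + c2 *: Q & S = k *: (c1 *: P - c2 *: Q)].

Lemma scal_nz k (v : vec) : k != 0 -> v != 0 -> k *: v != 0.
Proof. by move=> hk hv; rewrite scaler_eq0 negb_or hk hv. Qed.

Lemma hform_distinct (P Q R S : vec) : (2%:R : F) != 0 -> hform P Q R S -> distinct4 P Q R S.
Proof.
move=> h2 [hPQ [c1 [c2 [k [h1 h2' hk -> ->]]]]].
have ePR : cross P (c1 *: P + c2 *: Q) = c2 *: cross P Q by cmp P; cmp Q; veq.
have ePS : cross P (k *: (c1 *: P - c2 *: Q)) = (- (k * c2)) *: cross P Q by cmp P; cmp Q; veq.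
have eQR : cross Q (c1 *: P + c2 *: Q) = (- c1) *: cross P Q by cmp P; cmp Q; veq.
have eQS : cross Q (k *: (c1 *: P - c2 *: Q)) = (- (k * c1)) *: cross P Q by cmp P; cmp Q; veq.
have eRS : cross (c1 *: P + c2 *: Q) (k *: (c1 *: P - c2 *: Q)) = (- (2%:R * k * c1 * c2)) *: cross P Q.
  by cmp P; cmp Q; veq.
have nPR : cross P (c1 *: P + c2 *: Q) != 0 by rewrite ePR scal_nz.
have nPS : cross P (k *: (c1 *: P - c2 *: Q)) != 0 by rewrite ePS scal_nz // oppr_eq0 mulf_neq0.
have nQR : cross Q (c1 *: P + c2 *: Q) != 0 by rewrite eQR scal_nz // oppr_eq0.
have nQS : cross Q (k *: (c1 *: P - c2 *: Q)) != 0 by rewrite eQS scal_nz // oppr_eq0 mulf_neq0.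
have nRS : cross (c1 *: P + c2 *: Q) (k *: (c1 *: P - c2 *: Q)) != 0.
  by rewrite eRS scal_nz // oppr_eq0 !mulf_neq0.
split; first split.
- exact: cross_nz_l hPQ.
- exact: cross_nz_r hPQ.
- exact: cross_nz_r nPR.
- exact: cross_nz_r nPS.
split; split; exact: npeq.
Qed.

Lemma harmonic_hform (P Q R S : vec) : (2%:R : F) != 0 -> (harmonic P Q R S <-> hform P Q R S).
Proof.
move=> h2; split.
- case=> [[[hP hQ hR hS] [[nPQ _ _] _]] [_ [_ [c1 [c2 [d1 [d2 [eR [eS [hcd er]]]]]]]]]].
  have hPQ : cross P Q != 0.
    by apply/eqP => /(cross_peq hP hQ).
  have e : c2 * d1 = - (c1 * d2).
    by rewrite -mulN1r er divfK.
  have c2nz : c2 != 0.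
    apply: contraNneq hcd => c20; move: e; rewrite c20 mul0r => /eqP.
    by rewrite eq_sym oppr_eq0.
  have c1nz : c1 != 0 by move: hcd; rewrite mulf_eq0 negb_or => /andP [].
  have d2nz : d2 != 0 by move: hcd; rewrite mulf_eq0 negb_or => /andP [].
  have d1nz : d1 != 0.
    apply: contraNneq hcd => d10; move: e; rewrite d10 mulr0 => /eqP.
    by rewrite eq_sym oppr_eq0.
  split=> //; exists c1, c2, (d1 / c1); split=> //.
  - by rewrite mulf_neq0 // invr_eq0.
  - rewrite eS scalerBr !scalerA; congr (_ + _).
    + by congr (_ *: _); field.
    + rewrite -scaleNr; congr (_ *: _).
      have -> : d2 = - (c2 * d1) / c1 by rewrite e opprK; field.
      by field.
- move=> hf; have hd := hform_distinct h2 hf.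
  case: hf => hPQ [c1 [c2 [k [h1 h2' hk eR eS]]]].
  split=> //; split; last split.
  + by rewrite /incident /join eR; cmp P; cmp Q; vsimp; ring.
  + by rewrite /incident /join eS; cmp P; cmp Q; vsimp; ring.
  exists c1, c2, (k * c1), (- (k * c2)); split=> //; split.
    by rewrite eS scalerBr !scalerA scaleNr.
  split; first by rewrite mulf_neq0 // oppr_eq0 mulf_neq0.
  by field; rewrite oppr_eq0 mulf_neq0 // h1.
Qed.


Lemma vsub0 (x y : vec) : x - y = 0 -> x = y.
Proof. by move/eqP; rewrite subr_eq0 => /eqP. Qed.

Lemma pencil_aux (O m x : vec) : m != 0 -> dot O m != 0 -> dot O x = 0 -> cross m x = 0 -> x = 0.
Proof.
move=> hm hOm hx /(cross_par hm) [t ht]; move: hx; rewrite ht dotZr => /eqP.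
by rewrite mulf_eq0 (negbTE hOm) orbF => /eqP ->; rewrite scale0r.
Qed.

Lemma pencil_hform (l1 l2 l3 l4 : vec) : (2%:R : F) != 0 ->
  (harmonic_pencil l1 l2 l3 l4 <-> hform l1 l2 l3 l4).
Proof.
move=> h2; split.
- case=> [[[h1 h2' h3 h4] [[n12 _ _] _]] [O [hO [i1 [i2 [i3 [i4 [m [hm [nOm hh]]]]]]]]]].
  move/(harmonic_hform _ _ _ _ h2): hh => [hM [c1 [c2 [k [hc1 hc2 hk e3 e4]]]]].
  have hOm : dot O m != 0 by apply/eqP.
  split; first by apply/eqP => /(cross_peq h1 h2').
  exists c1, c2, k; split=> //.
  + apply: vsub0; apply: (pencil_aux hm hOm).
      by move: i1 i2 i3; rewrite /incident => i1 i2 i3; rewrite dotBr dotDr !dotZr i1 i2 i3; ring.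
    by rewrite crossBr crossDr !crossZr -e3 /meet subrr.
  + apply: vsub0; apply: (pencil_aux hm hOm).
      move: i1 i2 i4; rewrite /incident => i1 i2 i4.
      by rewrite dotBr dotZr dotBr !dotZr i1 i2 i4; ring.
    by rewrite crossBr crossZr crossBr !crossZr -e4 /meet subrr.
- move=> hf; have hd := hform_distinct h2 hf; split=> //.
  case: hf => h12 [c1 [c2 [k [hc1 hc2 hk e3 e4]]]].
  exists (cross l1 l2); split=> //.
  split; first by rewrite /incident dotC dot_cross_l.
  split; first by rewrite /incident dotC dot_cross_r.
  split; first by rewrite /incident e3; cmp l1; cmp l2; vsimp; ring.
  split; first by rewrite /incident e4; cmp l1; cmp l2; vsimp; ring.
  have [m [hm hOm]] := dot_nz h12.
  exists m; split=> //; split; first by rewrite /incident; apply/eqP.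
  apply/(harmonic_hform _ _ _ _ h2); split.
    have -> : cross (meet m l1) (meet m l2) = dot m (cross l1 l2) *: m.
      by rewrite /meet; cmp m; cmp l1; cmp l2; veq.
    by rewrite scal_nz // dotC.
  exists c1, c2, k; split=> //; rewrite /meet ?e3 ?e4.
    by cmp m; cmp l1; cmp l2; veq.
  by cmp m; cmp l1; cmp l2; veq.
Qed.


Definition rform (P m X Y : vec) : Prop :=
  [/\ P != 0, m != 0, dot P m != 0, X != 0 &
      peq Y (X - (2%:R * dot X m / dot P m) *: P)].

Lemma refl_rform (P m X Y : vec) : (2%:R : F) != 0 ->
  (harm_refl P m X Y <-> rform P m X Y).
Proof.
move=> h2; split.
- case=> hP [hm [nPm [hX [c1 [c2 c3]]]]].
  have hPm : dot P m != 0 by apply/eqP.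
  split=> //.
  have [eXP|nXP] := eqVneq (cross X P) 0.
    have pXP := cross_peq hX hP eXP.
    have pYP := c1 pXP.
    have [t ht] : exists t, X = t *: P.
      by apply: cross_par hP _; rewrite crossC eXP oppr0.
    have tnz : t != 0 by apply: contraNneq hX => t0; rewrite ht t0 scale0r.
    have -> : X - (2%:R * dot X m / dot P m) *: P = (- t) *: P.
      rewrite ht dotZl -scalerBl; congr (_ *: _); field; exact: hPm.
    by apply: peq_trans pYP (peq_scale hP _); rewrite oppr_eq0.
  have [eXm|nXm] := eqVneq (dot X m) 0.
    rewrite eXm mulr0 mul0r scale0r subr0.
    exact/peq_sym/c2.
  have nXP' : ~ peq X P by apply: npeq.
  move/(_ nXP' (fun h => negP nXm (introT eqP h))): c3.
  move/(harmonic_hform _ _ _ _ h2) => hf.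
  have hd := hform_distinct h2 hf.
  case: hf => hPM [d1 [d2 [k [hd1 hd2 hk eX eY]]]].
  rewrite /meet /join cross_cross in eX eY hd.
  have e1 : (1 + d2 * dot P m) *: cross X P = 0.
    have := congr1 (fun v => cross v P) eX.
    rewrite crossDl !crossZl crossuu scaler0 add0r crossBl !crossZl crossuu scaler0 sub0r.
    rewrite scalerN scalerA => h.
    by rewrite scalerDl scale1r {1}h addNr.
  have e1' : d2 = - (dot P m)^-1.
    move: e1 => /eqP; rewrite scaler_eq0 (negbTE nXP) orbF => /eqP h.
    apply: (mulIf hPm); rewrite mulNr mulVf //; apply/eqP; rewrite -addr_eq0 addrC; exact/eqP.
  have e2 : d1 = dot X m / dot P m.
    have := congr1 (fun v => dot v m) eX.
    rewrite dotDl !dotZl dotBl !dotZl e1' => ->; field; exact: hPm.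
  case: hd => [[_ _ _ hY] _].
  have eYT : Y = (- k) *: (X - (2%:R * dot X m / dot P m) *: P).
    rewrite eY e1' e2; move: hPm; move: (dot X m) (dot P m) => xm pm hpm.
    by cmp X; cmp P; veq_f.
  split=> //; exists (- k)^-1; split; first by rewrite invr_eq0 oppr_eq0.
  by rewrite eYT scalerA mulVf ?scale1r // oppr_eq0.
- case=> hP hm hPm hX [hY [s [hs eT]]].
  have eY : Y = s^-1 *: (X - (2%:R * dot X m / dot P m) *: P).
    by rewrite eT scalerA mulVf ?scale1r.
  split=> //; split=> //; split; first by move/eqP: hPm.
  split=> //; split.
    move=> [_ [t [ht eP]]].
    have xmnz : dot X m != 0 by move: hPm; rewrite eP dotZl mulf_eq0 negb_or => /andP [].
    have eT' : X - (2%:R * dot X m / dot P m) *: P = - X.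
      rewrite eP dotZl; move: xmnz; move: (dot X m) => xm hxm.
      by cmp X; veq_f.
    move: eT; rewrite eT' => eX.
    split=> //; exists (- (t * s)); split; first by rewrite oppr_eq0 mulf_neq0.
    by rewrite eP -[X]opprK eX scalerN scalerA scaleNr.
  split.
    rewrite /incident => xm0; move: eT; rewrite xm0 mulr0 mul0r scale0r subr0 => eX.
    split=> //; exists s^-1; split; first by rewrite invr_eq0.
    by rewrite eX scalerA mulVf ?scale1r.
  move=> nXP nXm; apply/(harmonic_hform _ _ _ _ h2).
  have hXm : dot X m != 0 by apply/eqP.
  have cPX : cross P X != 0.
    apply/eqP => e; apply: nXP; apply: cross_peq => //.
    by rewrite crossC e oppr0.
  rewrite /meet /join cross_cross; split.
    have -> : cross P (dot X m *: P - dot P m *: X) = (- dot P m) *: cross P X.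
      by move: (dot X m) (dot P m) => xm pm; cmp P; cmp X; veq.
    by rewrite scal_nz // oppr_eq0.
  exists (dot X m / dot P m), (- (dot P m)^-1), (- s^-1); split.
  - by rewrite mulf_neq0 // invr_eq0.
  - by rewrite oppr_eq0 invr_eq0.
  - by rewrite oppr_eq0 invr_eq0.
  - by move: hPm; move: (dot X m) (dot P m) => xm pm hpm; cmp P; cmp X; veq_f.
  - by rewrite eY; move: hPm; move: (dot X m) (dot P m) => xm pm hpm; cmp P; cmp X; veq_f.
Qed.


Lemma nz3_0 x y z : x != 0 -> mk3 x y z != 0.
Proof. by move=> h; apply/eqP; rewrite zero3 => /eq3 [e _ _]; move: h; rewrite e eqxx. Qed.
Lemma nz3_1 x y z : y != 0 -> mk3 x y z != 0.
Proof. by move=> h; apply/eqP; rewrite zero3 => /eq3 [_ e _]; move: h; rewrite e eqxx. Qed.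
Lemma nz3_2 x y z : z != 0 -> mk3 x y z != 0.
Proof. by move=> h; apply/eqP; rewrite zero3 => /eq3 [_ _ e]; move: h; rewrite e eqxx. Qed.

Lemma neq_of (x y : F) : x = y -> y != 0 -> x != 0.
Proof. by move=> ->. Qed.

Lemma peqE (u v : vec) : u != 0 -> v != 0 -> (peq u v <-> cross u v = 0).
Proof. by move=> hu hv; split; [apply: peq_cross | apply: cross_peq]. Qed.

Lemma mk3_eq0 x y z : mk3 x y z = 0 -> [/\ x = 0, y = 0 & z = 0].
Proof. by rewrite zero3 => /eq3. Qed.


Ltac lc1 q e := match type of e with ?l = ?r =>
  apply: subr0_eq; transitivity (q * (l - r)); [field; nzs | by rewrite (sub_of e) mulr0] end.
Ltac lc2 q1 e1 q2 e2 := match type of e1 with ?l1 = ?r1 => match type of e2 with ?l2 = ?r2 =>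
  apply: subr0_eq; transitivity (q1 * (l1 - r1) + q2 * (l2 - r2));
  [field; nzs | by rewrite (sub_of e1) (sub_of e2) !mulr0 addr0] end end.
Ltac lc4 q1 e1 q2 e2 q3 e3 q4 e4 :=
  match type of e1 with ?l1 = ?r1 => match type of e2 with ?l2 = ?r2 =>
  match type of e3 with ?l3 = ?r3 => match type of e4 with ?l4 = ?r4 =>
  apply: subr0_eq;
  transitivity (q1 * (l1 - r1) + q2 * (l2 - r2) + q3 * (l3 - r3) + q4 * (l4 - r4));
  [field; nzs | by rewrite (sub_of e1) (sub_of e2) (sub_of e3) (sub_of e4) !mulr0 !addr0] end end end end.

Lemma np_cross (u v : vec) : ~ peq u v -> u != 0 -> v != 0 -> cross u v != 0.
Proof. by move=> np hu hv; apply/eqP => /(cross_peq hu hv). Qed.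

Lemma dot_nz_r (u v : vec) : dot u v != 0 -> v != 0.
Proof. by apply: contraNneq => ->; rewrite dot0r. Qed.
Lemma dot_nz_l (u v : vec) : dot u v != 0 -> u != 0.
Proof. by apply: contraNneq => ->; rewrite dot0l. Qed.

Definition Curve (A C B D Z : vec) :=
  peq Z A \/ peq Z C \/ peq Z B \/ peq Z D \/
  ((~ peq Z A /\ ~ peq Z C /\ ~ peq Z B /\ ~ peq Z D) /\
   hform (cross Z A) (cross Z B) (cross Z C) (cross Z D)).

Definition RhsG (A B C P Z : vec) :=
  peq Z A \/ peq Z B \/ exists X Y R : vec,
  [/\ X != 0, incident X (cross A B), ~ peq X A & ~ peq X B] /\
  [/\ hform A B X Y, rform X (cross Y P) C R & peq R Z].

Section Norm.
Variables (al be ga : F).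
Hypotheses (h2 : (2%:R : F) != 0) (hal : al != 0) (hbe : be != 0) (hga : ga != 0).
Let e1 := mk3 1 0 0.
Let e2 := mk3 0 1 0.
Let e3 := mk3 0 0 1.
Let dd := mk3 al be ga.

Lemma tanA (a : vec) : hform (cross e1 e3) (cross e1 dd) (cross e1 e2) a ->
  exists sa, sa != 0 /\ a = sa *: mk3 0 (2%:R * ga) (- be).
Proof.
case=> _ [c1 [c2 [k [h1 h2' hk eq1 ->]]]].
move: eq1; rewrite /e1 /e2 /e3 /dd; vsimp; move/eq3 => [E1 E2 E3].
have hc1 : c1 = - (c2 * ga) by from E2.
exists (k * c2); split; first by rewrite mulf_neq0.
rewrite hc1; veq.
Qed.

Lemma tanB (b : vec) : hform (cross e2 e3) (cross e2 dd) (cross e2 e1) b ->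
  exists sb, sb != 0 /\ b = sb *: mk3 (2%:R * ga) 0 (- al).
Proof.
case=> _ [c1 [c2 [k [h1 h2' hk eq1 ->]]]].
move: eq1; rewrite /e1 /e2 /e3 /dd; vsimp; move/eq3 => [E1 E2 E3].
have hc1 : c1 = - (c2 * ga) by from E1.
exists (- (k * c2)); split; first by rewrite oppr_eq0 mulf_neq0.
rewrite hc1; veq.
Qed.

Lemma meetab sa sb : cross (sa *: mk3 0 (2%:R * ga) (- be)) (sb *: mk3 (2%:R * ga) 0 (- al))
  = (- (2%:R * ga * sa * sb)) *: mk3 al be (2%:R * ga).
Proof. veq. Qed.

Lemma norm1 p X Y : p != 0 -> hform e1 e2 X Y ->
  dot X (cross Y (p *: mk3 al be (2%:R * ga))) != 0.
Proof.
move=> hp [_ [c1 [c2 [k [h1 h2' hk -> ->]]]]].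
rewrite /e1 /e2; vsimp.
apply: (neq_of (y := - (2%:R * 2%:R * ga * p * k * c1 * c2))); first ring.
by rewrite oppr_eq0 !mulf_neq0.
Qed.

Definition conic (z : vec) :=
  2%:R * ga * z 0 i0 * z 0 i1 - al * z 0 i1 * z 0 i2 - be * z 0 i0 * z 0 i2.

Lemma e1nz : e1 != 0. Proof. by apply: nz3_0; rewrite oner_eq0. Qed.
Lemma e2nz : e2 != 0. Proof. by apply: nz3_1; rewrite oner_eq0. Qed.
Lemma e3nz : e3 != 0. Proof. by apply: nz3_2; rewrite oner_eq0. Qed.
Lemma ddnz : dd != 0. Proof. exact: nz3_0. Qed.

Lemma Kfwd z1 z2 z3 : let z := mk3 z1 z2 z3 in
  hform (cross z e1) (cross z e2) (cross z e3) (cross z dd) -> conic z = 0.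
Proof.
move=> z [_ [c1 [c2 [k [_ _ _ E G]]]]].
move: E G; rewrite /z /e1 /e2 /e3 /dd /conic; vsimp.
move=> /eq3 [E1 E2 E3] /eq3 [G1 G2 G3].
lc4 z1 G1 (- z2) G2 (k * z1) E1 (k * z2) E2.
Qed.

Ltac kill n := move/eqP: n; apply; rewrite ?zero3; apply/eq3; split; ring.

Lemma Kbwd z1 z2 z3 : let z := mk3 z1 z2 z3 in
  z != 0 -> ~ peq z e1 -> ~ peq z e2 -> ~ peq z e3 -> ~ peq z dd -> conic z = 0 ->
  hform (cross z e1) (cross z e2) (cross z e3) (cross z dd).
Proof.
move=> z hz p1 p2 p3 pd hQ.
have n1 := np_cross p1 hz e1nz; have n2 := np_cross p2 hz e2nz.
have n3 := np_cross p3 hz e3nz; have nd := np_cross pd hz ddnz.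
move: n1 n2 n3 nd hQ; rewrite /z /e1 /e2 /e3 /dd /conic; vsimp => n1 n2 n3 nd hQ.
have z3nz : z3 != 0.
  apply/eqP => z30; subst z3.
  have : z1 * z2 = 0 by lc1 ((2%:R * ga)^-1) hQ.
  move/eqP; rewrite mulf_eq0 => /orP [] /eqP z0; subst.
  - by kill n2.
  - by kill n1.
have z1nz : z1 != 0.
  apply/eqP => z10; subst z1.
  have z20 : z2 = 0 by lc1 (- (al * z3)^-1) hQ.
  by subst z2; kill n3.
have z2nz : z2 != 0.
  apply/eqP => z20; subst z2.
  have : z1 = 0 by lc1 (- (be * z3)^-1) hQ.
  by move/eqP; rewrite (negbTE z1nz).
have knz : z3 * be - z2 * ga != 0.
  apply/eqP => hk0; move/eqP: nd; apply; apply/eq3; split.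
  - by lc1 (-1 : F) hk0.
  - by lc2 (- z2^-1) hQ (- (z1 / z2)) hk0.
  - by lc2 (z3^-1) hQ (2%:R * z1 / z3) hk0.
split.
  rewrite !cross3; apply: nz3_2; apply: (neq_of (y := z3 * z3)); first ring.
  by rewrite mulf_neq0.
exists (- (z1 / z3)), (- (z2 / z3)), ((z3 * be - z2 * ga) / z2); split.
- by rewrite oppr_eq0 mulf_neq0 // invr_eq0.
- by rewrite oppr_eq0 mulf_neq0 // invr_eq0.
- by rewrite mulf_neq0 // invr_eq0.
- by veq_f.
- vsimp; apply/eq3; split.
  + by field; nzs.
  + by lc1 (- z2^-1) hQ.
  + by lc1 (z3^-1) hQ.
Qed.

Definition Rhs3 (P z : vec) := exists X Y R : vec,
  [/\ X != 0, incident X (cross e1 e2), ~ peq X e1 & ~ peq X e2] /\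
  [/\ hform e1 e2 X Y, rform X (cross Y P) e3 R & peq R z].

Lemma RhsFwd p z : p != 0 -> Rhs3 (p *: mk3 al be (2%:R * ga)) z ->
  [/\ conic z = 0, ~ peq z e1 & ~ peq z e2].
Proof.
move=> hp [X [Y [R [[hX _ _ _] [[_ [c1 [c2 [k [hc1 hc2 hk eX eY]]]]] [_ _ hXl _ pRT] pRz]]]]].
set P := p *: mk3 al be (2%:R * ga) in hXl pRT.
have dXl : dot X (cross Y P) = - (2%:R * 2%:R * ga * p * k * c1 * c2).
  by rewrite eX eY /P /e1 /e2; vsimp; ring.
have de3 : dot e3 (cross Y P) = k * p * (c1 * be + c2 * al).
  by rewrite eY /P /e1 /e2 /e3; vsimp; ring.
have es : 2%:R * dot e3 (cross Y P) / dot X (cross Y P) = - ((c1 * be + c2 * al) / (2%:R * ga * c1 * c2)).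
  by rewrite dXl de3; field; nzs.
have [_ [u [hu ez]]] := peq_trans (peq_sym pRT) pRz.
rewrite es eX in ez; subst z.
split.
- rewrite /conic /e1 /e2 /e3; vsimp; field; nzs.
- apply: npeq; rewrite /e1 /e2 /e3; vsimpn; apply: nz3_1.
  by apply: (neq_of (y := u)); first field; nzs.
- apply: npeq; rewrite /e1 /e2 /e3; vsimpn; apply: nz3_0.
  by apply: (neq_of (y := - u)); [field; nzs | rewrite oppr_eq0].
Qed.

Lemma RhsBwd p z1 z2 z3 : p != 0 -> let z := mk3 z1 z2 z3 in
  z != 0 -> conic z = 0 -> ~ peq z e1 -> ~ peq z e2 ->
  Rhs3 (p *: mk3 al be (2%:R * ga)) z.
Proof.
move=> hp z hz hQ p1 p2.
set P := p *: mk3 al be (2%:R * ga).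
have n1 := np_cross p1 hz e1nz; have n2 := np_cross p2 hz e2nz.
move: n1 n2 hQ; rewrite /z /e1 /e2 /e3 /dd /conic; vsimp => n1 n2 hQ.
have z3nz : z3 != 0.
  apply/eqP => z30; subst z3.
  have : z1 * z2 = 0 by lc1 ((2%:R * ga)^-1) hQ.
  move/eqP; rewrite mulf_eq0 => /orP [] /eqP z0; subst.
  - by kill n2.
  - by kill n1.
have [z10|z1nz] := eqVneq z1 0.
  subst z1; have z20 : z2 = 0 by lc1 (- (al * z3)^-1) hQ.
  subst z2.
  exists (mk3 al (- be) 0), (mk3 al be 0), e3; split; first split.
  - exact: nz3_0.
  - by rewrite /incident /e1 /e2; vsimp; ring.
  - apply: npeq; rewrite /e1 !cross3; apply: nz3_2.
    by apply: (neq_of (y := be)); first ring.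
  - apply: npeq; rewrite /e2 !cross3; apply: nz3_2.
    by apply: (neq_of (y := al)); first ring.
  have dXl : dot (mk3 al (- be) 0) (cross (mk3 al be 0) P)
     = 2%:R * 2%:R * al * be * ga * p by rewrite /P; vsimp; ring.
  have de3 : dot e3 (cross (mk3 al be 0) P) = 0.
    by rewrite /e3 /P; vsimp; ring.
  have hXl : dot (mk3 al (- be) 0) (cross (mk3 al be 0) P) != 0.
    by rewrite dXl !mulf_neq0.
  split.
  - split; first by rewrite /e1 /e2 !cross3; apply: nz3_2; apply: (neq_of (y := 1)); [ring | exact: oner_neq0].
    exists al, (- be), 1; split=> //.
    + by rewrite oppr_eq0.
    + exact: oner_neq0.
    + by rewrite /e1 /e2; veq.
    + by rewrite /e1 /e2; veq.
  - split=> //.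
    + exact: nz3_0.
    + exact: dot_nz_r hXl.
    + exact: e3nz.
    + rewrite de3 mulr0 mul0r scale0r subr0; exact: peq_refl e3nz.
  - split; first exact: e3nz.
    by exists z3; split=> //; rewrite /e3; veq.
have z2nz : z2 != 0.
  apply/eqP => z20; subst z2.
  have : z1 = 0 by lc1 (- (be * z3)^-1) hQ.
  by move/eqP; rewrite (negbTE z1nz).
set X := mk3 z1 z2 0; set Y := mk3 z1 (- z2) 0.
have dXl : dot X (cross Y P) = - (2%:R * 2%:R * ga * p * z1 * z2).
  by rewrite /X /Y /P; vsimp; ring.
have de3 : dot e3 (cross Y P) = p * (z1 * be + z2 * al).
  by rewrite /Y /P /e3; vsimp; ring.
have hXl : dot X (cross Y P) != 0 by rewrite dXl oppr_eq0 !mulf_neq0.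
set T := e3 - (2%:R * dot e3 (cross Y P) / dot X (cross Y P)) *: X.
have eT : T = mk3 ((z1 * be + z2 * al) / (2%:R * ga * z2)) ((z1 * be + z2 * al) / (2%:R * ga * z1)) 1.
  by rewrite /T dXl de3 /X /e3; veq_f.
have hT : T != 0 by rewrite eT; apply: nz3_2; exact: oner_neq0.
exists X, Y, T; split; first split.
- exact: nz3_0.
- by rewrite /incident /X /e1 /e2; vsimp; ring.
- apply: npeq; rewrite /X /e1 !cross3; apply: nz3_2.
  by apply: (neq_of (y := - z2)); [ring | rewrite oppr_eq0].
- apply: npeq; rewrite /X /e2 !cross3; apply: nz3_2.
  by apply: (neq_of (y := z1)); first ring.
split.
- split; first by rewrite /e1 /e2 !cross3; apply: nz3_2; apply: (neq_of (y := 1)); [ring | exact: oner_neq0].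
  exists z1, z2, 1; split=> //.
  + exact: oner_neq0.
  + by rewrite /X /e1 /e2; veq.
  + by rewrite /Y /e1 /e2; veq.
- split=> //.
  + exact: nz3_0.
  + exact: dot_nz_r hXl.
  + exact: e3nz.
  + exact: peq_refl hT.
- split=> //; exists z3; split=> //; rewrite eT; vsimp; apply/eq3; split.
  + by lc1 ((2%:R * ga * z2)^-1) hQ.
  + by lc1 ((2%:R * ga * z1)^-1) hQ.
  + by ring.
Qed.

Lemma conic_peq (z w : vec) : peq z w -> conic w = 0 -> conic z = 0.
Proof.
case=> hz [s [hs ->]]; cmp z; rewrite /conic; vsimp => h.
have : s * s * (2%:R * ga * a * b - al * b * c - be * a * c) = 0 by rewrite -h; ring.
by move/eqP; rewrite !mulf_eq0 (negbTE hs) /= => /eqP.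
Qed.

Lemma NormCurve p z : p != 0 -> z != 0 ->
  (Curve e1 e3 e2 dd z <-> RhsG e1 e2 e3 (p *: mk3 al be (2%:R * ga)) z).
Proof.
move=> hp hz; rewrite /Curve /RhsG.
have [c1|c1] := eqVneq (cross z e1) 0.
  have pz := cross_peq hz e1nz c1.
  by split=> _; left.
have [c2|c2] := eqVneq (cross z e2) 0.
  have pz := cross_peq hz e2nz c2.
  by split=> _; [right; left | right; right; left].
have n1 := npeq c1; have n2 := npeq c2.
have ce3 : conic e3 = 0 by rewrite /conic /e3; vsimp; ring.
have cdd : conic dd = 0 by rewrite /conic /dd; vsimp; ring.
split.
- have toR : conic z = 0 -> RhsG e1 e2 e3 (p *: mk3 al be (2%:R * ga)) z.
    move=> hQ; right; right; move: hz n1 n2 hQ; case: (vec3_ex z) => [z1 [z2 [z3 ->]]] => hz n1 n2 hQ.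
    exact: RhsBwd.
  case=> [//|[h|[//|[h|[[_ [_ [_ _]]] hf]]]]].
  + exact/toR/(conic_peq h).
  + exact/toR/(conic_peq h).
  + apply: toR; move: hf; case: (vec3_ex z) => [z1 [z2 [z3 ->]]]; exact: Kfwd.
- case=> [//|[//|hR]].
  have [hQ _ _] := RhsFwd hp hR.
  have [c3|c3] := eqVneq (cross z e3) 0.
    by right; left; exact: cross_peq hz e3nz c3.
  have [cd|cd] := eqVneq (cross z dd) 0.
    by right; right; right; left; exact: cross_peq hz ddnz cd.
  right; right; right; right.
  have n3 := npeq c3; have nd := npeq cd.
  split; first by [].
  move: hz n1 n2 n3 nd hQ; case: (vec3_ex z) => [z1 [z2 [z3 ->]]] => hz n1 n2 n3 nd hQ.
  exact: Kbwd.
Qed.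

End Norm.

Section Transfer.
Variable f : vec -> vec.
Hypothesis flin : forall a b u v, f (a *: u + b *: v) = a *: f u + b *: f v.
Hypothesis finj : forall u, f u = 0 -> u = 0.

Lemma f0 : f 0 = 0.
Proof. by have := flin 0 0 0 0; rewrite !scale0r addr0. Qed.
Lemma fZ a u : f (a *: u) = a *: f u.
Proof. by have := flin a 0 u 0; rewrite !scale0r !addr0. Qed.
Lemma fD u v : f (u + v) = f u + f v.
Proof. by have := flin 1 1 u v; rewrite !scale1r. Qed.
Lemma fB u v : f (u - v) = f u - f v.
Proof. by have := flin 1 (-1) u v; rewrite !scale1r !scaleN1r. Qed.
Lemma f_inj u v : f u = f v -> u = v.
Proof. by move=> e; apply: vsub0; apply: finj; rewrite fB e subrr. Qed.
Lemma fnz u : (f u != 0) = (u != 0).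
Proof.
apply/idP/idP; first by apply: contraNneq => ->; rewrite f0.
by apply: contraNneq => /finj ->.
Qed.

Lemma peq_f u v : peq (f u) (f v) <-> peq u v.
Proof.
split.
- case; rewrite fnz => hu [k [hk e]]; split=> //; exists k; split=> //.
  by apply: f_inj; rewrite fZ.
- case=> hu [k [hk ->]]; split; first by rewrite fnz.
  by exists k; rewrite fZ.
Qed.

Hypothesis crossf : forall u v, (cross (f u) (f v) != 0) = (cross u v != 0).

Lemma hform_f P Q R S : hform (f P) (f Q) (f R) (f S) <-> hform P Q R S.
Proof.
rewrite /hform crossf; split; case=> h [c1 [c2 [k [h1 h2 hk eR eS]]]]; split=> //;
  exists c1, c2, k; split=> //.
- by apply: f_inj; rewrite fD !fZ.
- by apply: f_inj; rewrite fZ fB !fZ.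
- by rewrite eR fD !fZ.
- by rewrite eS fZ fB !fZ.
Qed.
End Transfer.

Section Frame.
Variables p1 p2 p3 : vec.
Definition Dl := dot p1 (cross p2 p3).
Hypothesis hD : Dl != 0.
Definition comb (u : vec) := u 0 i0 *: p1 + u 0 i1 *: p2 + u 0 i2 *: p3.
Definition lcomb (l : vec) := l 0 i0 *: cross p2 p3 + l 0 i1 *: cross p3 p1 + l 0 i2 *: cross p1 p2.

Ltac cmp3 := rewrite /Dl /comb /lcomb; cmp p1; cmp p2; cmp p3.

Lemma G1 u v : cross (comb u) (comb v) = lcomb (cross u v).
Proof. cmp u; cmp v; cmp3; veq. Qed.
Lemma G2 u v : cross (lcomb u) (lcomb v) = Dl *: comb (cross u v).
Proof. cmp u; cmp v; cmp3; veq. Qed.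
Lemma G3 u v : dot (comb u) (lcomb v) = Dl * dot u v.
Proof. cmp u; cmp v; cmp3; vsimp; ring. Qed.
Lemma comb_lin a b u v : comb (a *: u + b *: v) = a *: comb u + b *: comb v.
Proof. cmp u; cmp v; cmp3; veq. Qed.
Lemma lcomb_lin a b u v : lcomb (a *: u + b *: v) = a *: lcomb u + b *: lcomb v.
Proof. cmp u; cmp v; cmp3; veq. Qed.
Lemma comb_surj0 v : Dl *: v = comb (mk3 (dot v (cross p2 p3)) (dot v (cross p3 p1)) (dot v (cross p1 p2))).
Proof. cmp v; cmp3; veq. Qed.
Lemma lcomb_surj0 v : Dl *: v = lcomb (mk3 (dot p1 v) (dot p2 v) (dot p3 v)).
Proof. cmp v; cmp3; veq. Qed.

Lemma comb_surj v : exists u, v = comb u.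
Proof.
exists (Dl^-1 *: mk3 (dot v (cross p2 p3)) (dot v (cross p3 p1)) (dot v (cross p1 p2))).
have := comb_lin Dl^-1 0 (mk3 (dot v (cross p2 p3)) (dot v (cross p3 p1)) (dot v (cross p1 p2))) 0.
by rewrite !scale0r !addr0 => ->; rewrite -comb_surj0 scalerA mulVf // scale1r.
Qed.
Lemma lcomb_surj v : exists u, v = lcomb u.
Proof.
exists (Dl^-1 *: mk3 (dot p1 v) (dot p2 v) (dot p3 v)).
have := lcomb_lin Dl^-1 0 (mk3 (dot p1 v) (dot p2 v) (dot p3 v)) 0.
by rewrite !scale0r !addr0 => ->; rewrite -lcomb_surj0 scalerA mulVf // scale1r.
Qed.

Lemma comb_inj u : comb u = 0 -> u = 0.
Proof.
move=> h; have e : forall l, dot u l = 0.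
  move=> l; have : Dl * dot u l = 0 by rewrite -G3 h dot0l.
  by move/eqP; rewrite mulf_eq0 (negbTE hD) => /eqP.
have := e (mk3 1 0 0); have := e (mk3 0 1 0); have := e (mk3 0 0 1).
case: (vec3_ex u) => [a [b [c ->]]]; rewrite !dot3 => h3 h2 h1.
rewrite zero3; apply/eq3; split; [from h1 | from h2 | from h3].
Qed.
Lemma lcomb_inj u : lcomb u = 0 -> u = 0.
Proof.
move=> h; have e : forall l, dot l u = 0.
  move=> l; have : Dl * dot l u = 0 by rewrite -G3 h dot0r.
  by move/eqP; rewrite mulf_eq0 (negbTE hD) => /eqP.
have := e (mk3 1 0 0); have := e (mk3 0 1 0); have := e (mk3 0 0 1).
case: (vec3_ex u) => [a [b [c ->]]]; rewrite !dot3 => h3 h2 h1.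
rewrite zero3; apply/eq3; split; [from h1 | from h2 | from h3].
Qed.

Lemma comb_nz u : (comb u != 0) = (u != 0).
Proof. exact: (fnz comb_lin comb_inj). Qed.
Lemma lcomb_nz u : (lcomb u != 0) = (u != 0).
Proof. exact: (fnz lcomb_lin lcomb_inj). Qed.
Lemma comb_cross u v : (cross (comb u) (comb v) != 0) = (cross u v != 0).
Proof. by rewrite G1 lcomb_nz. Qed.
Lemma lcomb_cross u v : (cross (lcomb u) (lcomb v) != 0) = (cross u v != 0).
Proof. by rewrite G2 scaler_eq0 negb_or hD comb_nz. Qed.
Lemma peq_comb u v : peq (comb u) (comb v) <-> peq u v.
Proof. exact: (peq_f comb_lin comb_inj). Qed.
Lemma hform_comb P Q R S : hform (comb P) (comb Q) (comb R) (comb S) <-> hform P Q R S.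
Proof. exact: (hform_f comb_lin comb_inj comb_cross). Qed.
Lemma hform_lcomb P Q R S : hform (lcomb P) (lcomb Q) (lcomb R) (lcomb S) <-> hform P Q R S.
Proof. exact: (hform_f lcomb_lin lcomb_inj lcomb_cross). Qed.
Lemma incident_comb x l : incident (comb x) (lcomb l) <-> incident x l.
Proof.
rewrite /incident G3; split=> [/eqP|->]; last by rewrite mulr0.
by rewrite mulf_eq0 (negbTE hD) => /eqP.
Qed.

Lemma rform_comb P m X Y k : k != 0 ->
  (rform (comb P) (k *: lcomb m) (comb X) (comb Y) <-> rform P m X Y).
Proof.
move=> hk; rewrite /rform !dotZr !G3 !comb_nz scaler_eq0 negb_or hk lcomb_nz /=.
have e : forall x y, 2%:R * (k * (Dl * x)) / (k * (Dl * y)) = 2%:R * x / y.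
  move=> x y; have [->|hy] := eqVneq y 0; first by rewrite !mulr0 !invr0 !mulr0.
  by field; nzs.
rewrite e.
have -> : comb X - (2%:R * dot X m / dot P m) *: comb P = comb (X - (2%:R * dot X m / dot P m) *: P).
  by rewrite (fB comb_lin) (fZ comb_lin).
rewrite !mulf_eq0 !negb_or hk hD /=.
by split; case=> h1 h2 h3 h4 h5; split=> //; apply/peq_comb.
Qed.

Lemma Curve_comb A C B D Z :
  Curve (comb A) (comb C) (comb B) (comb D) (comb Z) <-> Curve A C B D Z.
Proof. by rewrite /Curve !peq_comb !G1 hform_lcomb. Qed.

Lemma RhsG_comb A B C P Z k : k != 0 ->
  (RhsG (comb A) (comb B) (comb C) (k *: comb P) (comb Z) <-> RhsG A B C P Z).
Proof.
move=> hk; rewrite /RhsG !peq_comb; split; case=> [h|[h|h]]; [by left|by right;left| |by left|by right;left|].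
- right; right; case: h => X [Y [R [[hX hi h1 h2] [hf hr hp]]]].
  case: (comb_surj X) => x ex; case: (comb_surj Y) => y ey; case: (comb_surj R) => r er.
  subst X Y R; exists x, y, r; split; split.
  + by rewrite -comb_nz.
  + by move: hi; rewrite G1 incident_comb.
  + by move=> /peq_comb.
  + by move=> /peq_comb.
  + by move/hform_comb: hf.
  + by move: hr; rewrite crossZr G1 rform_comb.
  + by move/peq_comb: hp.
- right; right; case: h => x [y [r [[hX hi h1 h2] [hf hr hp]]]].
  exists (comb x), (comb y), (comb r); split; split.
  + by rewrite comb_nz.
  + by rewrite G1 incident_comb.
  + by move=> /peq_comb.
  + by move=> /peq_comb.
  + exact/hform_comb.
  + by rewrite crossZr G1 rform_comb.
  + exact/peq_comb.
Qed.

Lemma comb_e1 : comb (mk3 1 0 0) = p1.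
Proof. by rewrite /comb !(mk3_0, mk3_1, mk3_2) scale1r !scale0r !addr0. Qed.
Lemma comb_e2 : comb (mk3 0 1 0) = p2.
Proof. by rewrite /comb !(mk3_0, mk3_1, mk3_2) scale1r !scale0r addr0 add0r. Qed.
Lemma comb_e3 : comb (mk3 0 0 1) = p3.
Proof. by rewrite /comb !(mk3_0, mk3_1, mk3_2) scale1r !scale0r !add0r. Qed.

End Frame.

Lemma onc_iff (h2 : (2%:R : F) != 0) (A C B D Z : vec) :
  on_harmonic_curve A C B D Z <-> Z != 0 /\ Curve A C B D Z.
Proof.
rewrite /on_harmonic_curve /Curve /join; split.
- case=> hZ [h|[h|[h|[h|[hn hp]]]]]; split=> //; do ?[by left|right].
  by split=> //; apply/pencil_hform.
- case=> hZ [h|[h|[h|[h|[hn hp]]]]]; split=> //; do ?[by left|right].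
  by split=> //; apply/pencil_hform.
Qed.

Lemma rhs_iff (h2 : (2%:R : F) != 0) (A B C a b Z : vec) :
  (peq Z A \/ peq Z B \/
   exists X Y R : vec,
     [/\ X != 0, incident X (join A B), ~ peq X A & ~ peq X B] /\
     [/\ harmonic A B X Y, harm_refl X (join Y (meet a b)) C R & peq R Z])
  <-> RhsG A B C (cross a b) Z.
Proof.
rewrite /RhsG /join /meet; split; case=> [h|[h|[X [Y [R [h1 [h3 h4 h5]]]]]]];
  do ?[by left|by right; left]; right; right; exists X, Y, R; split=> //.
- by split=> //; [apply/harmonic_hform | apply/refl_rform].
- by split=> //; [apply/harmonic_hform | apply/refl_rform].
Qed.

End V3.

Section M.
Variable F : fieldType.
Notation vec := 'rV[F]_3.

Definition MainConcl (A C B D a b : vec) : Prop :=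
  quadrangle A C B D ->
  tangent_line (join A C) (join A D) (join A B) a ->
  tangent_line (join B C) (join B D) (join B A) b ->
  (forall X Y : 'rV[F]_3,
     X != 0 -> incident X (join A B) -> ~ peq X A -> ~ peq X B ->
     harmonic A B X Y ->
     ~ incident X (join Y (meet a b))) /\
  (forall Z : 'rV[F]_3, Z != 0 ->
     (on_harmonic_curve A C B D Z <->
      (peq Z A \/ peq Z B \/
       exists X Y R : 'rV[F]_3,
         [/\ X != 0, incident X (join A B), ~ peq X A & ~ peq X B] /\
         [/\ harmonic A B X Y,
             harm_refl X (join Y (meet a b)) C R
           & peq R Z]))).

Lemma main_gen (h2 : (2%:R : F) != 0) (p1 p2 p3 d a' b' : vec) :
  Dl p1 p2 p3 != 0 ->
  MainConcl (comb p1 p2 p3 (mk3 1 0 0)) (comb p1 p2 p3 (mk3 0 0 1)) (comb p1 p2 p3 (mk3 0 1 0))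
    (comb p1 p2 p3 d) (lcomb p1 p2 p3 a') (lcomb p1 p2 p3 b').
Proof.
move=> hD.
move=> [hd [nB [nDAC [nDAB nDCB]]]] tA tB.
have [al [be [ga ed]]] := vec3_ex d; subst d.
have hal : al != 0.
  apply/eqP => al0; apply: nDCB; rewrite /join G1 incident_comb // /incident cross3 dot3.
  by rewrite al0; ring.
have hbe : be != 0.
  apply/eqP => be0; apply: nDAC; rewrite /join G1 incident_comb // /incident cross3 dot3.
  by rewrite be0; ring.
have hga : ga != 0.
  apply/eqP => ga0; apply: nDAB; rewrite /join G1 incident_comb // /incident cross3 dot3.
  by rewrite ga0; ring.
move: tA tB; rewrite /tangent_line => /(pencil_hform _ _ _ _ h2) tA /(pencil_hform _ _ _ _ h2) tB.
rewrite /join !G1 in tA tB.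
move/(iffLR (hform_lcomb hD _ _ _ _)): tA => /tanA [sa [hsa ea]].
move/(iffLR (hform_lcomb hD _ _ _ _)): tB => /tanB [sb [hsb eb]].
have hmeet : cross (lcomb p1 p2 p3 a') (lcomb p1 p2 p3 b') = Dl p1 p2 p3 *: comb p1 p2 p3 ((- (2%:R * ga * sa * sb)) *: mk3 al be (2%:R * ga)).
  by rewrite G2 ea eb meetab.
have hpp : - (2%:R * ga * sa * sb) != 0 by rewrite oppr_eq0 !mulf_neq0.
split.
- move=> X Y hX _ nXA nXB hh.
  case: (comb_surj hD X) hX nXA nXB hh => x -> hX nXA nXB hh.
  case: (comb_surj hD Y) hh => y -> hh.
  move/(iffLR (harmonic_hform _ _ _ _ h2))/(iffLR (hform_comb hD _ _ _ _)): hh => hh.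
  rewrite /meet hmeet /join crossZr G1 /incident dotZr G3; apply/eqP.
  apply: mulf_neq0 => //; apply: mulf_neq0 => //; exact: norm1 hpp hh.
- move=> Z hZ; case: (comb_surj hD Z) hZ => z -> hZ.
  have hz : z != 0 by rewrite -(comb_nz hD).
  split.
  + move/(iffLR (onc_iff h2 _ _ _ _ _)) => [_ /(iffLR (Curve_comb hD _ _ _ _ _)) hc].
    apply/(iffRL (rhs_iff h2 _ _ _ _ _ _)); rewrite hmeet.
    apply/(iffRL (RhsG_comb hD _ _ _ _ _ hD)).
    exact/(iffLR (NormCurve h2 hal hbe hga hpp hz)).
  + move/(iffLR (rhs_iff h2 _ _ _ _ _ _)); rewrite hmeet.
    move/(iffLR (RhsG_comb hD _ _ _ _ _ hD)) => hr.
    apply/(iffRL (onc_iff h2 _ _ _ _ _)); split=> //.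
    apply/(iffRL (Curve_comb hD _ _ _ _ _)).
    exact/(iffRL (NormCurve h2 hal hbe hga hpp hz)).
Qed.
End M.

Theorem mainTheorem4 (F : fieldType) (hchar : (2%:R : F) != 0)
    (A C B D a b : 'rV[F]_3) :
  quadrangle A C B D ->
  tangent_line (join A C) (join A D) (join A B) a ->
  tangent_line (join B C) (join B D) (join B A) b ->
  (forall X Y : 'rV[F]_3,
     X != 0 -> incident X (join A B) -> ~ peq X A -> ~ peq X B ->
     harmonic A B X Y ->           (* Y = X . rho_{A,B} *)
     ~ incident X (join Y (meet a b))) /\
  (forall Z : 'rV[F]_3, Z != 0 ->
     (on_harmonic_curve A C B D Z <->
      (peq Z A \/ peq Z B \/
       exists X Y R : 'rV[F]_3,
         [/\ X != 0, incident X (join A B), ~ peq X A & ~ peq X B] /\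
         [/\ harmonic A B X Y,            (* Y = X . rho_{A,B} *)
             harm_refl X (join Y (meet a b)) C R  (* R = C . rho_{X,x} *)
           & peq R Z]))).
Proof.
move=> hq tA tB.
have hD : Dl A B C != 0.
  case: hq => _ [nB _].
  rewrite /Dl dot_cross_cyc crossC dotNr oppr_eq0; apply/eqP; exact: nB.
have [d eD] := comb_surj hD D.
have [a' ea] := lcomb_surj hD a.
have [b' eb] := lcomb_surj hD b.
have := @main_gen F hchar A B C d a' b' hD.
rewrite (comb_e1 A B C) (comb_e2 A B C) (comb_e3 A B C) -eD -ea -eb.
by move=> /(_ hq tA tB).
Qed.
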